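(* Let $l$ be a prime, $\tilde\chi$ a Dirichlet character modulo $l$ with associated character $\chi$, and $f\in S_2^k(\Gamma_0^{(2)}(l),\chi)$. Let $s$ be a symmetric positive definite integral $2\times 2$ matrix with $l'=\det(s)$, $l\nmid l'$. Let $W_l=\begin{pmatrix}lx&y\\ ll'z&lw\end{pmatrix}$ with $x,y,z,w\in\mathbb{Z}$ and $\det W_l=l$ (so $\begin{pmatrix}x&y\\ l'z&lw\end{pmatrix}\in\mathrm{SL}_2(\mathbb{Z})$). Then \[W_l\,\phi_s^*f(\tau)=l^k\,\chi(l'z^2)\,\phi_{ls}^*(f|_{E_2})(\tau).\]
   Context: $\Gamma_0^{(2)}(l)=\{\begin{pmatrix}A&B\\C&D\end{pmatrix}\in \mathrm{Sp}_4(\mathbb{Z}) : C\equiv 0 \pmod l\}$; for $M=\begin{pmatrix}A&B\\C&D\end{pmatrix}$, $F|_kM(Z)=\det(CZ+D)^{-k}F((AZ+B)(CZ+D)^{-1})$ on the genus 2 Siegel upper half space; $\chi(M)=\tilde\chi(\det D)$, and for an integer $n$ prime to $l$, $\chi(n)=\tilde\chi(n)$. $S_2^k(\Gamma_0^{(2)}(l),\chi)$ is the space of Siegel cusp forms of degree 2, weight $k$ with $f|_kM=\chi(M)f$ for all $M\in\Gamma_0^{(2)}(l)$. $E_2=\begin{pmatrix}0&I_2\\-I_2&0\end{pmatrix}$. For a positive definite symmetric $2\times2$ matrix $s$ and a function $F$ on $\mathbb{H}_2$, $\phi_s^*(F)(\tau)=F(s\tau)$. For an elliptic form $g$ of weight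 $2k$ and $\gamma=\begin{pmatrix}a&b\\c&d\end{pmatrix}\in\mathrm{GL}_2^+(\mathbb{Q})$, $(g|\gamma)(\tau)=\det(\gamma)^k(c\tau+d)^{-2k}g(\gamma\tau)$, and $W_l g:=g|W_l$. *)

(* Defs.v *)
From HB Require Import structures.
From mathcomp Require Import all_boot all_order all_algebra.
From mathcomp Require Import all_classical all_reals all_analysis.
From mathcomp Require Import complex.
Import Order.TTheory GRing.Theory Num.Theory.
Import numFieldNormedType.Exports.

Set Implicit Arguments.
Unset Strict Implicit.
Unset Printing Implicit Defensive.

Local Open Scope classical_set_scope.
Local Open Scope ring_scope.

Definition mx2 (a b c d : int) : 'M[int]_2 :=
  \matrix_(i < 2, j < 2)
    if i == 0 then (if j == 0 then a else b) else (if j == 0 then c else d).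

Definition E2 : 'M[int]_(2 + 2) := block_mx 0 1%:M (- 1%:M) 0.

Definition is_Sp4Z (M : 'M[int]_(2 + 2)) : Prop := M^T *m E2 *m M = E2.
Definition is_Gamma0_2 (l : nat) (M : 'M[int]_(2 + 2)) : Prop :=
  is_Sp4Z M /\ forall i j, (l%:Z %| dlsubmx M i j)%Z.

Section SiegelDefs.
Variable R : realType.

Definition toC (z : int) : R[i] := z%:~R.
Definition mxC m n (M : 'M[int]_(m, n)) : 'M[R[i]]_(m, n) := map_mx toC M.

Definition posdef (S : 'M[R]_2) : Prop :=
  forall v : 'cV[R]_2, v != 0 -> 0 < (v^T *m S *m v) 0 0.

Definition inH1 (tau : R[i]) : Prop := 0 < complex.Im tau.
Definition inH2 (Z : 'M[R[i]]_2) : Prop :=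
  Z^T = Z /\ posdef (map_mx (@complex.Im R) Z).

Definition slash2 (k : nat) (M : 'M[int]_(2 + 2)) (F : 'M[R[i]]_2 -> R[i])
  (Z : 'M[R[i]]_2) : R[i] :=
  let A := mxC (ulsubmx M) in let B := mxC (ursubmx M) in
  let C := mxC (dlsubmx M) in let D := mxC (drsubmx M) in
  (\det (C *m Z + D)) ^- k * F ((A *m Z + B) *m invmx (C *m Z + D)).

Definition sym_dirs : seq 'M[R[i]]_2 :=
  [:: delta_mx 0 0; delta_mx 1 1; delta_mx 0 1 + delta_mx 1 0].

(* holomorphy on H_2: complex differentiability in each of the three
   independent coordinates (by Hartogs' theorem this is holomorphy) *)
Definition holomorphic_H2 (F : 'M[R[i]]_2 -> R[i]) : Prop :=
  forall Z, inH2 Z -> forall E, E \in sym_dirs ->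
    derivable (fun t : R[i]^o => (F (Z + (t : R[i]) *: E) : R[i]^o)) 0 1.

Definition diag2 (a b : R[i]) : 'M[R[i]]_2 :=
  \matrix_(i < 2, j < 2) if i == j then (if i == 0 then a else b) else 0.

Definition dirichlet_char (l : nat) (chi : int -> R[i]) : Prop :=
  [/\ forall m n : int, chi (m * n) = chi m * chi n,
      forall m : int, chi (m + l%:Z) = chi m,
      chi 1 = 1 &
      forall m : int, chi m != 0 <-> coprime (absz m) l].

(* Siegel cusp forms S_2^k(Gamma_0^(2)(l), chi): holomorphic on H_2,
   modular for Gamma_0^(2)(l) with character chi(M) = chi~(det D),
   and vanishing Siegel Phi operator at every cusp. *)
Definition is_cusp_form (l k : nat) (chi : int -> R[i])
  (F : 'M[R[i]]_2 -> R[i]) : Prop :=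
  [/\ holomorphic_H2 F,
      (forall M, is_Gamma0_2 l M -> forall Z, inH2 Z ->
          slash2 k M F Z = chi (\det (drsubmx M)) * F Z) &
      (forall M, is_Sp4Z M -> forall tau, inH1 tau ->
          (fun t : R => (slash2 k M F (diag2 tau (Complex 0 t)) : R[i]^o))
             x @[x --> +oo] --> (0 : R[i]^o))].

Definition phis (s : 'M[int]_2) (F : 'M[R[i]]_2 -> R[i]) (tau : R[i]) : R[i] :=
  F (tau *: mxC s).

Definition eslash (k : nat) (g : R[i] -> R[i]) (gam : 'M[int]_2)
  (tau : R[i]) : R[i] :=
  let a := toC (gam 0 0) in let b := toC (gam 0 1) in
  let c := toC (gam 1 0) in let d := toC (gam 1 1) in
  (toC (\det gam)) ^+ k * (c * tau + d) ^- (2 * k) *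
    g ((a * tau + b) / (c * tau + d)).

End SiegelDefs.

(* Main.v *)
Require Import Defs.
From HB Require Import structures.
From mathcomp Require Import all_boot all_order all_algebra.
From mathcomp Require Import all_classical all_reals all_analysis.
From mathcomp Require Import complex.
From mathcomp Require Import ring lra zify.
From Stdlib Require Import Lia.
Import Order.TTheory GRing.Theory Num.Theory.
Import numFieldNormedType.Exports.
Local Open Scope classical_set_scope.
Local Open Scope ring_scope.
Set Implicit Arguments.
Unset Strict Implicit.
Lemma sum2 (V : nmodType) (F : 'I_2 -> V) : \sum_(i < 2) F i = F 0 + F 1.
Proof. by rewrite big_ord_recl big_ord1; congr (_ + F _); apply: val_inj. Qed.

Lemma det2 (K : comRingType) (M : 'M[K]_2) :
  \det M = M 0 0 * M 1 1 - M 0 1 * M 1 0.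
Proof.
rewrite (expand_det_row M 0) sum2 /cofactor !det_mx11 !mxE /=.
rewrite expr0 expr1 mul1r mulN1r.
have -> : lift 0 0 = 1 :> 'I_2 by apply: val_inj.
have -> : lift 1 0 = 0 :> 'I_2 by apply: val_inj.
by rewrite mulrN.
Qed.

Lemma mx2P (T : Type) (M N : 'M[T]_2) :
  M 0 0 = N 0 0 -> M 0 1 = N 0 1 -> M 1 0 = N 1 0 -> M 1 1 = N 1 1 -> M = N.
Proof.
move=> h00 h01 h10 h11; apply/matrixP => i j.
case: i => [[|[|//]]] Hi; case: j => [[|[|//]]] Hj.
- have -> : Ordinal Hi = 0 by apply: val_inj.
  by have -> : Ordinal Hj = 0 by apply: val_inj.
- have -> : Ordinal Hi = 0 by apply: val_inj.
  by have -> : Ordinal Hj = 1 by apply: val_inj.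
- have -> : Ordinal Hi = 1 by apply: val_inj.
  by have -> : Ordinal Hj = 0 by apply: val_inj.
- have -> : Ordinal Hi = 1 by apply: val_inj.
  by have -> : Ordinal Hj = 1 by apply: val_inj.
Qed.

Lemma invmx_eq (K : comUnitRingType) n (A B : 'M[K]_n) :
  A *m B = 1%:M -> invmx A = B.
Proof.
move=> AB; have [Au _] := mulmx1_unit AB.
by rewrite -[invmx A]mulmx1 -AB mulmxA mulVmx // mul1mx.
Qed.

Section S.
Variable R : realType.
Lemma toCM (m n : int) : toC R (m * n) = toC R m * toC R n.
Proof. by rewrite /toC intrM. Qed.
Lemma toCD (m n : int) : toC R (m + n) = toC R m + toC R n.
Proof. by rewrite /toC intrD. Qed.
Lemma toCN (m : int) : toC R (- m) = - toC R m.
Proof. by rewrite /toC mulrNz. Qed.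
Lemma toC0 : toC R 0 = 0. Proof. by []. Qed.
Lemma toC1 : toC R 1 = 1. Proof. by []. Qed.
Lemma toCE (m : int) : toC R m = ((m%:~R : R)%:C)%C.
Proof. by rewrite /toC (rmorph_int (real_complex R)). Qed.
Lemma mxCE m n (M : 'M[int]_(m, n)) i j : mxC R M i j = toC R (M i j).
Proof. by rewrite mxE. Qed.
End S.

Lemma mx2E (a b c d : int) :
  [/\ mx2 a b c d 0 0 = a, mx2 a b c d 0 1 = b, mx2 a b c d 1 0 = c & mx2 a b c d 1 1 = d].
Proof. by rewrite !mxE. Qed.
Lemma cv2P (T : Type) (M N : 'M[T]_(2,1)) :
  M 0 0 = N 0 0 -> M 1 0 = N 1 0 -> M = N.
Proof.
move=> h0 h1; apply/matrixP => i j.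
have -> : j = 0 by apply: val_inj; case: j => [[|//]].
case: i => [[|[|//]]] Hi.
- by have -> : Ordinal Hi = 0 by apply: val_inj.
- by have -> : Ordinal Hi = 1 by apply: val_inj.
Qed.

Section S2.
Variable R : realType.
Lemma ImCM (n : int) (t : R[i]) : complex.Im (toC R n * t) = n%:~R * complex.Im t.
Proof. by case: t => p q; rewrite toCE /= mul0r addr0. Qed.
Lemma ImC (n : int) : complex.Im (toC R n) = 0.
Proof. by rewrite toCE. Qed.
Lemma ImD (t1 t2 : R[i]) : complex.Im (t1 + t2) = complex.Im t1 + complex.Im t2.
Proof. by case: t1; case: t2. Qed.
Lemma Im_ninv (r : R) (t : R[i]) : 0 < r -> 0 < complex.Im t ->
  0 < complex.Im (- ((r%:C)%C * t)^-1).
Proof.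
case: t => p q /= hr hq.
rewrite !mul0r subr0 addr0 opprK.
apply: divr_gt0; first by apply: mulr_gt0.
apply: ltr_wpDl; first exact: sqr_ge0.
by rewrite exprn_gt0 // mulr_gt0.
Qed.
Lemma toC_eq0 (n : int) : (toC R n == 0) = (n == 0).
Proof. by rewrite /toC intr_eq0. Qed.
End S2.

Lemma posdef2 (R : realType) (s : 'M[int]_2) : s 1 0 = s 0 1 ->
  posdef (map_mx (fun n : int => n%:~R : R) s) -> forall p q : R, (p != 0) || (q != 0) ->
  0 < (s 0 0)%:~R * p ^+ 2 + 2 * (s 0 1)%:~R * p * q + (s 1 1)%:~R * q ^+ 2.
Proof.
move=> hs P p q pq.
pose v : 'cV[R]_2 := \col_i (if i == 0 then p else q).
have v0 : v != 0.
  apply: contraTneq pq => h.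
  have h0 := congr1 (fun M : 'cV[R]_2 => M 0 0) h.
  have h1 := congr1 (fun M : 'cV[R]_2 => M 1 0) h.
  by move: h0 h1; rewrite !mxE /= => -> ->; rewrite eqxx.
have := P v v0.
rewrite ?(mxE, sum2) /= hs.
congr (_ < _); ring.
Qed.
Unset Implicit Arguments.
Ltac ent := apply: mx2P; rewrite ?(mxE, sum2, mxCE) /= ?(toCM, toCD, toCN, toC0, toC1).

Ltac entE := rewrite ?(mxE, sum2, mxCE) /= ?(toCM, toCD, toCN, toC0, toC1).
Ltac nzt := repeat (apply/andP; split); try done; assumption.

Theorem proposition4p3 (R : realType) (l k : nat) (chi : int -> R[i])
  (f : 'M[R[i]]_2 -> R[i]) (s : 'M[int]_2) (x y z w : int) :
  prime l ->
  dirichlet_char l chi ->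
  is_cusp_form l k chi f ->
  s^T = s -> posdef (map_mx (fun n : int => n%:~R : R) s) ->
  ~~ (l%:Z %| \det s)%Z ->
  \det (mx2 (l%:Z * x) y (l%:Z * \det s * z) (l%:Z * w)) = l%:Z ->
  forall tau : R[i], inH1 tau ->
    eslash k (phis s f) (mx2 (l%:Z * x) y (l%:Z * \det s * z) (l%:Z * w)) tau
    = (l%:R : R[i]) ^+ k * chi (\det s * z ^+ 2)
      * phis (l%:Z *: s) (slash2 k E2 f) tau.
Proof.
move=> lp chiD [_ fmod _] sT spos ndvd hdet tau tauH.
rewrite /eslash /phis /slash2.
have [e00 e01 e10 e11] := mx2E (l%:Z * x) y (l%:Z * \det s * z) (l%:Z * w).
rewrite e00 e01 e10 e11 hdet.
have hs10 : s 1 0 = s 0 1 by rewrite -[in LHS]sT mxE.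
have hls : \det s = s 0 0 * s 1 1 - s 0 1 * s 0 1 by rewrite det2 hs10.
have l1 : (1 < l)%N := prime_gt1 lp.
have hl0 : l%:Z != 0 by rewrite eqz_nat; apply/eqP => h; rewrite h in l1.
have hW : l%:Z * x * w - \det s * y * z = 1.
  apply: (mulfI hl0); rewrite mulr1 -[in RHS]hdet (@det2 _ (mx2 _ _ _ _)) e00 e01 e10 e11; ring.
have ds0 : \det s != 0.
  by apply: contraNneq ndvd => ->; rewrite dvdz0.
have z0 : z != 0.
  apply/eqP => z0; move: hW; rewrite z0 mulr0 subr0 => hW.
  have h : (l%:Z %| l%:Z * (x * w))%Z by apply/dvdzP; exists (x * w); ring.
  rewrite mulrA hW in h.
  by move: h; rewrite dvdz1 absz_nat => /eqP l1'; rewrite l1' in l1.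
have E2ul : ulsubmx E2 = 0 by rewrite /E2 block_mxKul.
have E2ur : ursubmx E2 = 1%:M by rewrite /E2 block_mxKur.
have E2dl : dlsubmx E2 = - 1%:M by rewrite /E2 block_mxKdl.
have E2dr : drsubmx E2 = 0 by rewrite /E2 block_mxKdr.
rewrite E2ul E2ur E2dl E2dr.
have tau0 : tau != 0 by apply: contraTneq tauH => ->; rewrite /inH1 ltxx.
have Lc0 : toC R l != 0 by rewrite toC_eq0.
have Lp0 : toC R (\det s) != 0 by rewrite toC_eq0.
have Lc0u : (l%:R : R[i]) != 0 by exact: Lc0.
have Lp0u : ((s 0 0)%:~R * (s 1 1)%:~R - (s 0 1)%:~R * (s 0 1)%:~R : R[i]) != 0.
  by move: Lp0; rewrite hls toCD toCN !toCM.
pose u := - (toC R l * toC R (\det s) * tau)^-1.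
pose adjC := mxC R (mx2 (s 1 1) (- s 0 1) (- s 0 1) (s 0 0)).
have hLp : toC R (\det s) = toC R (s 0 0) * toC R (s 1 1) - toC R (s 0 1) * toC R (s 0 1).
  by rewrite hls toCD toCN !toCM.
have hN : (mxC R (- 1%:M) *m (tau *: mxC R (l%:Z *: s)) + mxC R 0) *m (u *: adjC) = 1%:M.
  ent; rewrite hs10 /u hLp; field; nzt.
rewrite (invmx_eq hN) (_ : mxC R 0 *m _ + _ = 1%:M) ?mul1mx; last by ent; ring.
have hdetE : \det (mxC R (- 1%:M) *m (tau *: mxC R (l%:Z *: s)) + mxC R 0)
    = (toC R l * tau) ^+ 2 * toC R (\det s).
  rewrite det2; entE; rewrite hs10 hLp; ring.
rewrite hdetE.
pose Dm := mx2 (z * s 1 1) (- (z * s 0 1)) (- (z * s 0 1)) (z * s 0 0).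
pose M : 'M[int]_(2 + 2) := block_mx (- y *: s) (x%:M) (- (l%:Z * w)%:M) Dm.
have hM : is_Gamma0_2 l M.
  split.
  - rewrite /is_Sp4Z /M /E2 tr_block_mx !mulmx_block.
    move: hW; rewrite hls => hW'.
    congr (block_mx _ _ _ _); apply: mx2P; entE; rewrite ?hs10; lia.
  - move=> i j; rewrite /M block_mxKdl !mxE.
    case: (i == j); rewrite ?mulr0n ?oppr0 ?dvdz0 // mulr1n.
    by apply/dvdzP; exists (- w); ring.
have hZH : inH2 (u *: adjC).
  split; first by ent.
  have PD := posdef2 hs10 spos.
  have A0 : 0 < ((s 0 0)%:~R : R).
    have h := PD 1 0; rewrite oner_neq0 in h; have := h isT; lra.
  have dpos : 0 < ((s 0 0)%:~R * (s 1 1)%:~R - (s 0 1)%:~R * (s 0 1)%:~R : R).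
    have h := PD (s 0 1)%:~R (- (s 0 0)%:~R).
    rewrite oppr_eq0 (gt_eqF A0) /= orbT in h; have := h isT.
    rewrite (_ : _ + _ + _ = (s 0 0)%:~R * ((s 0 0)%:~R * (s 1 1)%:~R - (s 0 1)%:~R * (s 0 1)%:~R)); last by ring.
    by rewrite pmulr_rgt0.
  have Lpos : 0 < ((l%:Z * \det s)%:~R : R).
    rewrite intrM hls intrD mulrNz !intrM; apply: mulr_gt0 => //.
    by rewrite -pmulrn ltr0n (ltn_trans _ l1).
  have Iu : 0 < complex.Im u.
    by rewrite /u -!toCM toCE; apply: Im_ninv.
  move=> v v0.
  rewrite ?(mxE, sum2, mxCE) /= !(mulrC u) !ImCM !intrN.
  have vv : (v 1 0 != 0) || (- v 0 0 != 0).
    rewrite oppr_eq0 -negb_and; apply: contra v0 => /andP [/eqP h1 /eqP h0].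
    by apply/eqP; apply: cv2P; rewrite ?mxE ?h0 ?h1.
  have H := mulr_gt0 Iu (PD _ _ vv).
  apply: (lt_le_trans H); rewrite le_eqVlt; apply/orP; left; apply/eqP; ring.
have := fmod M hM _ hZH; rewrite /slash2 /M block_mxKul block_mxKur block_mxKdl block_mxKdr.
have hK : toC R (\det s) * toC R z * tau + toC R w != 0.
  apply/eqP => /(congr1 (@complex.Im R)).
  rewrite -toCM ImD ImCM ImC addr0 => /eqP.
  rewrite mulf_eq0 intr_eq0 mulf_eq0 (negPf ds0) (negPf z0) /=.
  by rewrite gt_eqF.
have hKu := hK; rewrite hLp in hKu.
pose Q := (tau / (toC R (\det s) * toC R z * tau + toC R w)) *: mxC R s.
have hQ : (mxC R (- (l%:Z * w)%:M) *m (u *: adjC) + mxC R Dm) *m Q = 1%:M.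
  ent; rewrite ?hs10 /u hLp; field; nzt.
have hP : (mxC R (- y *: s) *m (u *: adjC) + mxC R x%:M) *m Q =
   ((toC R (l%:Z * x) * tau + toC R y) /
      (toC R (l%:Z * \det s * z) * tau + toC R (l%:Z * w))) *: mxC R s.
  rewrite (_ : toC R (l%:Z * \det s * z) * tau + toC R (l%:Z * w) =
     toC R l * (toC R (\det s) * toC R z * tau + toC R w)); last by rewrite !toCM; ring.
  ent; rewrite ?hs10 /u hLp; field; nzt.
have hdetK : \det (mxC R (- (l%:Z * w)%:M) *m (u *: adjC) + mxC R Dm) =
   ((toC R (\det s) * toC R z * tau + toC R w) / (tau * toC R (\det s))) ^+ 2 * toC R (\det s).
  rewrite det2; entE; rewrite ?hs10 /u hLp; field; nzt.
have hDm : \det Dm = \det s * z ^+ 2 by rewrite det2 !mxE /= hls; ring.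
rewrite (invmx_eq hQ) hP hdetK hDm => hmod.
set K := (_ / _) ^+ 2 * _ in hmod.
set P := (_ / _) *: mxC R s in hmod *.
set FZ := f (u *: adjC) in hmod *.
set D := toC R (l%:Z * \det s * z) * tau + toC R (l%:Z * w).
have K0 : K != 0.
  by rewrite /K mulf_neq0 // expf_neq0 // mulf_neq0 // invr_eq0 mulf_neq0.
have fP : f P = K ^+ k * (chi (\det s * z ^+ 2) * FZ).
  by rewrite -hmod mulrA mulfV ?mul1r // expf_neq0.
have -> : toC R l = l%:R by rewrite /toC -pmulrn.
have key : (D ^+ 2)^-1 * K = ((l%:R * tau) ^+ 2 * toC R (\det s))^-1.
  rewrite /D /K (_ : toC R (l%:Z * \det s * z) * tau + toC R (l%:Z * w) =
     toC R l * (toC R (\det s) * toC R z * tau + toC R w)); last by rewrite !toCM; ring.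
  field; nzt.
clearbody K D P FZ.
have e1 : ((l%:R * tau) ^+ 2 * toC R (\det s)) ^- k = (D ^+ (2 * k))^-1 * K ^+ k.
  by rewrite -[LHS]exprVn -key exprMn exprVn -exprM.
rewrite fP e1.
move: (D ^+ (2 * k)) (K ^+ k) (l%:R ^+ k : R[i]) (chi (\det s * z ^+ 2)) => a b c e.
rewrite /GRing.exp /=.
ring.
Qed.
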